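(* Let $q$ be a prime power, $n\ge1$, and let $k$ be an integer with $n(q-1)-\frac{q-1}{2}<k\le n(q-1)$. Put $\ell=n(q-1)-k$. Then \[\dim(\operatorname{Hull}(C_{n,k}^q))=\dim(C_{n,\ell}^q)-1=\binom{n+\ell}{\ell}-1.\]
   Context: For a prime power $q$ and integers $n\ge 1$, $k\ge 0$, the projective Reed-Muller code $C_{n,k}^q\subseteq \mathbb{F}_q^N$, $N=\frac{q^{n+1}-1}{q-1}$, is defined as follows. For each point of $\mathbb{P}^n(\mathbb{F}_q)$ choose the affine representative $(p_0,\dots,p_n)\in\mathbb{F}_q^{n+1}\setminus\{0\}$ whose left-most nonzero coordinate equals $1$, and fix an ordering $P_1',\dots,P_N'$ of these representatives. Then $C_{n,k}^q=\{(F(P_1'),\dots,F(P_N')) : F\in \mathbb{F}_q[x_0,\dots,x_n]_k\}$, where $\mathbb{F}_q[x_0,\dots,x_n]_k$ is the space of homogeneous polynomials of degree $k$ together with $0$ (so $C_{n,0}^q$ is spanned by the all-ones vector). Duals are with respect to the standard dot product, and $\operatorname{Hull}(C)=C\cap C^\perp$. *)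

(* Defs.v *)
From HB Require Import structures.
From mathcomp Require Import all_boot all_order all_algebra all_field.
From mathcomp Require Import mpoly.
From Stdlib Require Import ClassicalEpsilon.

Set Implicit Arguments.
Unset Strict Implicit.
Unset Printing Implicit Defensive.

Import GRing.Theory.
Local Open Scope ring_scope.

Section ProjRM.
Variable F : finFieldType.
Variable n : nat. (* projective dimension; coordinates x_0 .. x_n *)

(* affine representative whose left-most nonzero coordinate equals 1 *)
Definition normalized_rep (v : 'rV[F]_(n.+1)) : bool :=
  [exists i : 'I_(n.+1),
     (v 0 i == 1) && [forall j : 'I_(n.+1), (j < i)%N ==> (v 0 j == 0)]].

Definition proj_points : {set 'rV[F]_(n.+1)} := [set v | normalized_rep v].

Definition Npts : nat := #|proj_points|.

Definition point (i : 'I_Npts) : 'rV[F]_(n.+1) := enum_val i.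

Definition eval_vec (P : {mpoly F[n.+1]}) : 'rV[F]_Npts :=
  \row_(i < Npts) P.@[fun j => point i 0 j].

(* membership in C_{n,k}^q : evaluation vector of a homogeneous polynomial of
   degree k or of 0 (0 is k.-homog in mpoly) *)
Definition in_PRM (k : nat) (c : 'rV[F]_Npts) : bool :=
  if excluded_middle_informative
       (exists P : {mpoly F[n.+1]}, P \is k.-homog /\ eval_vec P = c)
  then true else false.

Definition PRM (k : nat) : {vspace 'rV[F]_Npts} :=
  <<[seq c <- enum 'rV[F]_Npts | in_PRM k c]>>%VS.

Definition dotp (u v : 'rV[F]_Npts) : F := \sum_(i < Npts) u 0 i * v 0 i.

Definition dual_code (C : {vspace 'rV[F]_Npts}) : {vspace 'rV[F]_Npts} :=
  <<[seq v <- enum 'rV[F]_Npts |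
       [forall c : 'rV[F]_Npts, (c \in C) ==> (dotp c v == 0%R)]]>>%VS.

Definition hull (C : {vspace 'rV[F]_Npts}) : {vspace 'rV[F]_Npts} :=
  (C :&: dual_code C)%VS.

End ProjRM.

(* Main.v *)
Require Import Defs.
From HB Require Import structures.
From mathcomp Require Import all_boot all_order all_algebra all_field.
From mathcomp Require Import all_fingroup all_solvable.
From mathcomp Require Import mpoly.
From mathcomp Require Import zify ring lra.
From Stdlib Require Import ClassicalEpsilon.
Set Implicit Arguments. Unset Strict Implicit. Unset Printing Implicit Defensive.
Import GRing.Theory.
Local Open Scope ring_scope.

Section Field.
Variable F : finFieldType.
Local Notation q := #|F|.

Lemma charq : (q%:R : F) = 0.
Proof.
have := @expg_cardG _ (setT_group F) (GRing.one F) (in_setT _).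
by rewrite cardsT /=.
Qed.

Lemma q_gt1 : (1 < q)%N.
Proof. exact: finNzRing_gt1. Qed.

Lemma qm1E : ((q - 1)%:R : F) = -1.
Proof.
apply/eqP; rewrite -subr_eq0 opprK natr1 -addn1 subnK ?charq //.
by apply: ltnW; apply: q_gt1.
Qed.

Lemma expq1 (x : F) : x != 0 -> x ^+ (q - 1) = 1.
Proof.
move=> x0; apply: (mulfI x0); rewrite mulr1 -exprS subn1 prednK ?expf_card //.
exact: ltnW q_gt1.
Qed.

Lemma exp_red (x : F) e r : (0 < e)%N -> x ^+ (e + (q - 1) * r) = x ^+ e.
Proof.
move=> e0; have [->|x0] := eqVneq x 0.
  by rewrite !expr0n; case: e e0 => //= e _; rewrite addSn.
by rewrite exprD exprM expq1 // expr1n mulr1.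
Qed.

Lemma exp_mod (x : F) e : x != 0 -> x ^+ e = x ^+ (e %% (q - 1)).
Proof.
move=> x0; rewrite {1}(divn_eq e (q - 1)) exprD mulnC exprM expq1 // expr1n mul1r //.
Qed.

Lemma card_nz : #|[pred x : F | x != 0]| = (q - 1)%N.
Proof.
have -> : #|[pred x : F | x != 0]| = #|predC1 (0 : F)| by apply: eq_card.
by rewrite cardC1 subn1.
Qed.

Lemma exists_nonroot r : (0 < r)%N -> (r < q - 1)%N ->
  exists2 x : F, x != 0 & x ^+ r != 1.
Proof.
move=> r0 rq.
case: (boolP [forall x : F, (x != 0) ==> (x ^+ r == 1)]) => [/forallP H|]; last first.
  rewrite negb_forall => /existsP [x]; rewrite negb_imply => /andP[x0 xr].
  by exists x.
exfalso.
have := @max_poly_roots F ('X^r - 1) [seq x <- enum F | x != 0].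
rewrite -size_poly_eq0 size_Xn_sub_1 // filter_uniq ?enum_uniq //.
have -> : all (root ('X^r - 1)) [seq x <- enum F | x != 0].
  apply/allP => x; rewrite mem_filter => /andP[x0 _].
  by rewrite rootE !hornerE subr_eq0; have := H x; rewrite x0.
move=> /(_ isT isT).
have -> : size [seq x <- enum F | x != 0] = (q - 1)%N.
  rewrite -card_nz cardE size_filter /enum_mem size_filter.
  rewrite count_filter; apply: eq_count => x /=; by rewrite andbT.
lia.
Qed.

Lemma sum_nz_exp E :
  \sum_(x : F | x != 0) x ^+ E = if (q - 1 %| E)%N then -1 else 0.
Proof.
case: ifP => [dv|ndv].
  rewrite (eq_bigr (fun _ => 1)); last first.
    by move=> x x0; rewrite -(divnK dv) mulnC exprM expq1 // expr1n.
  by rewrite sumr_const card_nz qm1E.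
set r := (E %% (q - 1))%N.
have r0 : (0 < r)%N by rewrite lt0n /r -/(dvdn _ _) ndv.
have rq : (r < q - 1)%N by rewrite ltn_mod; have := q_gt1; lia.
have [mu mu0 mur] := exists_nonroot r0 rq.
rewrite (eq_bigr (fun x => x ^+ r)); last by move=> x x0; rewrite exp_mod.
set S := \sum_(x | x != 0) x ^+ r.
have : S = mu ^+ r * S.
  rewrite {1}/S (reindex_inj (mulfI mu0)) /= mulr_sumr; apply: eq_big => x.
    by rewrite mulf_eq0 (negbTE mu0).
  by move=> _; rewrite exprMn.
move/eqP; rewrite -subr_eq0 -{1}[S]mul1r -mulrBl mulf_eq0 subr_eq0 eq_sym (negbTE mur) /=.
by move/eqP.
Qed.

Definition Ssum e := \sum_(x : F) x ^+ e.

Lemma SsumE e : Ssum e = if (0 < e)%N && (q - 1 %| e)%N then -1 else 0.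
Proof.
rewrite /Ssum (bigD1 0) //=.
case: e => [|e] /=.
  rewrite expr0 (eq_bigr (fun _ => 1)) ?sumr_const ?card_nz //.
  by rewrite qm1E addrN.
by rewrite expr0n add0r sum_nz_exp.
Qed.

Lemma Ssum_small e : (e < q - 1)%N -> Ssum e = 0.
Proof.
move=> eq; rewrite SsumE; case: e eq => //= e eq.
have /negbTE -> // : ~~ (q - 1 %| e.+1)%N.
apply/negP => /(dvdn_leq (ltn0Sn _)) => h.
by have := leq_ltn_trans h eq; rewrite ltnn.
Qed.

End Field.

Lemma ndvd_small d x : (0 < x)%N -> (x < d)%N -> (d %| x)%N = false.
Proof. by move=> x0 xd; apply/negP => /(dvdn_leq x0); rewrite leqNgt xd. Qed.

Section SpanInd.
Variable K : fieldType.
Variable V : vectType K.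
Lemma span_ind (Pr : V -> Prop) (X : seq V) :
  Pr 0 -> (forall a u v, Pr u -> Pr v -> Pr (a *: u + v)) ->
  (forall u, u \in X -> Pr u) -> forall v, v \in <<X>>%VS -> Pr v.
Proof.
move=> P0 PD; elim: X => [|x X IH] HX v.
  by rewrite span_nil memv0 => /eqP ->.
rewrite span_cons => /memv_addP [y /vlineP [a ->] [z zX ->]].
apply: PD; first by apply: HX; rewrite mem_head.
apply: IH => // w wX; apply: HX; by rewrite in_cons wX orbT.
Qed.
End SpanInd.

Section Proj.
Variable F : finFieldType.
Variable n : nat.
Local Notation q := #|F|.
Local Notation reps := (proj_points F n).
Local Notation vec := ('rV[F]_n.+1).

Definition mono (c : 'I_n.+1 -> nat) (v : vec) : F := \prod_i v 0 i ^+ c i.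

Lemma sum_mono c : \sum_(v : vec) mono c v = \prod_i Ssum F (c i).
Proof.
rewrite /Ssum bigA_distr_bigA /=.
rewrite [RHS](reindex (fun v : vec => [ffun i => v 0 i])) /=.
  by apply: eq_bigr => v _; apply: eq_bigr => i _; rewrite ffunE.
exists (fun f => \row_i f i) => [v _|f _].
  by apply/rowP => i; rewrite !mxE ffunE.
by apply/ffunP => i; rewrite ffunE mxE.
Qed.

Definition isLead (v : vec) (i : 'I_n.+1) :=
  (v 0 i != 0) && [forall j : 'I_n.+1, (j < i)%N ==> (v 0 j == 0)].

Lemma isLead_uniq v i j : isLead v i -> isLead v j -> i = j.
Proof.
move=> /andP[vi /forallP Hi] /andP[vj /forallP Hj].
case: (ltngtP i j) => [ij|ji|/val_inj //].
  by have := Hj i; rewrite ij /= (negbTE vi).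
by have := Hi j; rewrite ji /= (negbTE vj).
Qed.

Lemma isLead_ex v : v != 0 -> exists i, isLead v i.
Proof.
move=> v0.
have [i vi] : exists i, v 0 i != 0.
  apply/existsP; move: v0; apply: contraR; rewrite negb_exists => /forallP H.
  by apply/eqP/rowP => i; rewrite mxE; have := H i; rewrite negbK => /eqP.
pose P m := (m < n.+1)%N && (v 0 (inord m) != 0).
have Pi : exists m, P m by exists i; rewrite /P ltn_ord inord_val.
case: (ex_minnP Pi) => m /andP[mn vm] Hm.
exists (inord m); rewrite /isLead vm /=; apply/forallP => j; apply/implyP => jm.
apply/negPn/negP => vj.
have := Hm j; rewrite /P ltn_ord inord_val vj => /(_ isT).
by move=> mj; move: jm; rewrite inordK // ltnNge mj.
Qed.

Definition lc (v : vec) : F := if [pick i | isLead v i] is Some i then v 0 i else 1.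

Lemma lcE v i : isLead v i -> lc v = v 0 i.
Proof.
move=> Li; rewrite /lc; case: pickP => [j Lj|/(_ i)]; last by rewrite Li.
by rewrite (isLead_uniq Lj Li).
Qed.

Lemma isLeadZ a v i : a != 0 -> isLead (a *: v) i = isLead v i.
Proof.
move=> a0; rewrite /isLead mxE mulf_eq0 (negbTE a0) /=; congr (_ && _).
by apply: eq_forallb => j; rewrite mxE mulf_eq0 (negbTE a0).
Qed.

Lemma repP v : (v \in reps) = [exists i, isLead v i && (v 0 i == 1)].
Proof.
rewrite inE /normalized_rep; apply: eq_existsb => i; rewrite /isLead.
by case: eqP => [->|_]; rewrite ?oner_neq0 ?andbT ?andbF.
Qed.

Lemma rep_lead P : P \in reps -> exists2 i, isLead P i & P 0 i = 1.
Proof. by rewrite repP => /existsP[i /andP[Li /eqP Pi]]; exists i. Qed.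

Lemma lc_rep P : P \in reps -> lc P = 1.
Proof. by case/rep_lead => i Li Pi; rewrite (lcE Li). Qed.

Lemma rep_nz P : P \in reps -> P != 0.
Proof.
case/rep_lead => i _ Pi; apply/negP => /eqP P0.
by move: Pi; rewrite P0 mxE => /eqP; rewrite eq_sym oner_eq0.
Qed.

Lemma lc_nz v : v != 0 -> lc v != 0.
Proof. by case/isLead_ex => i Li; rewrite (lcE Li); case/andP: Li. Qed.

Lemma lcZ a v : a != 0 -> v != 0 -> lc (a *: v) = a * lc v.
Proof.
move=> a0 /isLead_ex [i Li]; rewrite (lcE Li) (@lcE _ i) ?mxE //.
by rewrite isLeadZ.
Qed.

Definition nrm (v : vec) := (lc v)^-1 *: v.

Lemma nrm_rep v : v != 0 -> nrm v \in reps.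
Proof.
move=> v0; have [i Li] := isLead_ex v0.
rewrite repP; apply/existsP; exists i.
rewrite isLeadZ ?invr_eq0 ?lc_nz // Li /= mxE (lcE Li) mulVf //.
by case/andP: Li.
Qed.

Lemma nrmZ P a : P \in reps -> a != 0 -> nrm (a *: P) = P.
Proof.
move=> Pr a0; rewrite /nrm lcZ ?rep_nz // lc_rep // mulr1 scalerA mulVf //.
by rewrite scale1r.
Qed.

Lemma lc_nrmK v : v != 0 -> lc v *: nrm v = v.
Proof. by move=> v0; rewrite /nrm scalerA divff ?lc_nz // scale1r. Qed.

Lemma orbit_sum (phi : vec -> F) :
  \sum_(v : vec) phi v =
  phi 0 + \sum_(P in reps) \sum_(a : F | a != 0) phi (a *: P).
Proof.
rewrite (bigD1 0) //=; congr (_ + _).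
rewrite pair_big_dep /=.
rewrite (reindex_onto (fun p : vec * F => p.2 *: p.1) (fun v => (nrm v, lc v))) /=;
  last by move=> v v0; rewrite lc_nrmK.
apply: eq_bigl => -[P a] /=; apply/idP/idP.
  case/andP => aP0 /eqP [e1 e2].
  have a0 : a != 0 by apply: contraNneq aP0 => ->; rewrite scale0r.
  by rewrite a0 andbT -e1 nrm_rep.
case/andP => Pr a0.
rewrite scaler_eq0 negb_or a0 rep_nz //= nrmZ // lcZ ?rep_nz // lc_rep //.
by rewrite mulr1.
Qed.

Lemma monoZ a c v : mono c (a *: v) = a ^+ (\sum_i c i) * mono c v.
Proof.
rewrite /mono (eq_bigr (fun i => a ^+ c i * v 0 i ^+ c i)); last first.
  by move=> i _; rewrite mxE exprMn.
by rewrite big_split /= prodrXr.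
Qed.

Lemma mono0 c : (0 < \sum_i c i)%N -> mono c 0 = 0.
Proof.
move=> c0; have [i ci] : exists i, (0 < c i)%N.
  apply/existsP; move: c0; apply: contraLR; rewrite negb_exists => /forallP H.
  rewrite -leqNgt leqn0 sum_nat_eq0; apply/forallP => i; apply/implyP => _.
  by have := H i; rewrite lt0n negbK.
have /negbTE ci' : c i != 0%N by rewrite -lt0n.
by rewrite /mono (bigD1 i) //= mxE expr0n ci' mul0r.
Qed.

Lemma sum_reps_mono c : (q - 1 %| \sum_i c i)%N -> (0 < \sum_i c i)%N ->
  \sum_(P in reps) mono c P = - \prod_i Ssum F (c i).
Proof.
move=> dv c0; have := orbit_sum (mono c).
rewrite sum_mono mono0 // add0r => ->.
rewrite -sumrN; apply: eq_bigr => P _.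
rewrite (eq_bigr (fun a => a ^+ (\sum_i c i) * mono c P)); last by move=> a _; rewrite monoZ.
by rewrite -mulr_suml sum_nz_exp dv mulN1r opprK.
Qed.

Lemma card_reps_F : (#|reps|%:R : F) = 1.
Proof.
have m1 v : mono (fun _ => 0%N) v = 1 by rewrite /mono big1 // => i _; rewrite expr0.
have := orbit_sum (mono (fun _ => 0%N)).
rewrite sum_mono big_ord_recl SsumE /= mul0r m1.
rewrite (eq_bigr (fun _ => -1)) => [|P _]; last first.
  rewrite (eq_bigr (fun _ => 1)) => [|a _]; last by rewrite m1.
  by rewrite sumr_const card_nz qm1E.
by rewrite sumr_const mulNrn => /eqP; rewrite eq_sym addr_eq0 opprK => /eqP <-.
Qed.

Local Notation N := (Npts F n).
Local Notation ev := (@eval_vec F n).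
Local Notation pt := (@point F n).

Lemma sum_points (g : vec -> F) : \sum_(i < N) g (pt i) = \sum_(P in reps) g P.
Proof. by symmetry; rewrite big_enum_val. Qed.

Lemma evD P Q : ev (P + Q) = ev P + ev Q.
Proof. by apply/rowP => i; rewrite !mxE mevalD. Qed.

Lemma evZ a P : ev (a *: P) = a *: ev P.
Proof. by apply/rowP => i; rewrite !mxE mevalZ. Qed.

Lemma ev0 : ev 0 = 0.
Proof. by apply/rowP => i; rewrite !mxE meval0. Qed.

Lemma ev_sum (I : Type) (r : seq I) (Pr : pred I) (G : I -> {mpoly F[n.+1]}) :
  ev (\sum_(i <- r | Pr i) G i) = \sum_(i <- r | Pr i) ev (G i).
Proof.
exact: (big_morph _ evD ev0).
Qed.

Lemma evX (m : 'X_{1..n.+1}) : ev 'X_[m] = \row_i mono m (pt i).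
Proof. by apply/rowP => i; rewrite !mxE mevalX. Qed.

Lemma dotpC (u v : 'rV[F]_N) : dotp u v = dotp v u.
Proof. by apply: eq_bigr => i _; rewrite mulrC. Qed.

Lemma dotpDr (c : 'rV[F]_N) a u v : dotp c (a *: u + v) = a * dotp c u + dotp c v.
Proof.
rewrite /dotp mulr_sumr -big_split; apply: eq_bigr => i _.
by rewrite !mxE mulrDr mulrCA.
Qed.

Lemma dotp_ev P Q : dotp (ev P) (ev Q) = \sum_(x in reps) (P * Q).@[fun j => x 0 j].
Proof.
rewrite /dotp -(sum_points (fun x => (P * Q).@[fun j => x 0 j])).
by apply: eq_bigr => i _; rewrite !mxE mevalM.
Qed.

Lemma PRMP k c : reflect (exists2 P, P \is k.-homog & ev P = c) (c \in PRM F n k).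
Proof.
apply: (iffP idP) => [|[P hP <-]]; last first.
  apply: memv_span; rewrite mem_filter mem_enum andbT /in_PRM.
  by case: excluded_middle_informative => // -[]; exists P.
rewrite /PRM; move: c; apply: (@span_ind _ _ (fun c => exists2 P, P \is k.-homog & ev P = c)) => [|a u v [P hP <-] [Q hQ <-]|u].
- by exists 0; rewrite ?ev0 // rpred0.
- by exists (a *: P + Q); rewrite ?evD ?evZ // rpredD ?rpredZ.
- rewrite mem_filter /in_PRM; case: excluded_middle_informative => //.
  by case=> P [hP eP] _; exists P.
Qed.

Lemma dualP (C : {vspace 'rV[F]_N}) u : reflect (forall c, c \in C -> dotp c u = 0) (u \in dual_code C).
Proof.
apply: (iffP idP) => [|H]; last first.
  apply: memv_span; rewrite mem_filter mem_enum andbT.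
  by apply/forallP => c; apply/implyP => /H ->.
move=> uD c cC; move: u uD; apply: (@span_ind _ _ (fun u => dotp c u = 0)) => [|a u v hu hv|u].
- by rewrite /dotp big1 // => i _; rewrite mxE mulr0.
- by rewrite dotpDr hu hv mulr0 addr0.
- by rewrite mem_filter => /andP[/forallP /(_ c) /implyP /(_ cC) /eqP].
Qed.

Lemma dim_dual (C : {vspace 'rV[F]_N}) : (\dim (dual_code C) + \dim C <= N)%N.
Proof.
set D := dual_code C.
pose b := vbasis C; pose u := vbasis D.
pose B : 'M[F]_(\dim C, N) := \matrix_(i, j) (tnth b i) 0 j.
pose U : 'M[F]_(\dim D, N) := \matrix_(i, j) (tnth u i) 0 j.
have rowB i : row i B = tnth b i by apply/rowP => j; rewrite !mxE.
have rowU i : row i U = tnth u i by apply/rowP => j; rewrite !mxE.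
have rfB : row_free B.
  apply/inj_row_free => x; rewrite mulmx_sum_row => h.
  have /freeP fb := basis_free (vbasisP C).
  apply/rowP => i; rewrite mxE; apply: (fb (fun i => x 0 i)).
  by rewrite -[X in _ = X]h; apply: eq_bigr => j _; rewrite rowB (tnth_nth 0).
have rfU : row_free U.
  apply/inj_row_free => x; rewrite mulmx_sum_row => h.
  have /freeP fb := basis_free (vbasisP D).
  apply/rowP => i; rewrite mxE; apply: (fb (fun i => x 0 i)).
  by rewrite -[X in _ = X]h; apply: eq_bigr => j _; rewrite rowU (tnth_nth 0).
have UB : U *m B^T = 0.
  apply/matrixP => i j; rewrite !mxE.
  have uD : tnth u i \in D by apply: vbasis_mem; apply: mem_tnth.
  have bC : tnth b j \in C by apply: vbasis_mem; apply: mem_tnth.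
  transitivity (dotp (tnth b j) (tnth u i)); last exact: (dualP _ _ uD) _ bC.
  rewrite /dotp; apply: eq_bigr => k _.
  by rewrite !mxE mulrC.
have := mxrankS (introT sub_kermxP UB).
rewrite mxrank_ker mxrank_tr (eqP rfB) (eqP rfU).
have := rank_leq_col B; rewrite (eqP rfB).
lia.
Qed.

Definition mv (c : 'I_n.+1 -> nat) : 'rV[F]_N := \row_i mono c (pt i).

Lemma evX' (m : 'X_{1..n.+1}) : ev 'X_[m] = mv m.
Proof. exact: evX. Qed.

Lemma dotp_mv a b : dotp (mv a) (mv b) = \sum_(x in reps) mono (fun i => a i + b i)%N x.
Proof.
rewrite /dotp -sum_points; apply: eq_bigr => i _; rewrite !mxE /mono -big_split /=.
by apply: eq_bigr => j _; rewrite exprD.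
Qed.

Lemma dotp_suml (I : finType) (a : I -> F) (x : I -> 'rV[F]_N) z :
  dotp (\sum_i a i *: x i) z = \sum_i a i * dotp (x i) z.
Proof.
rewrite /dotp (eq_bigr (fun j => \sum_i a i * (x i 0 j * z 0 j))); last first.
  by move=> j _; rewrite summxE mulr_suml; apply: eq_bigr => i _; rewrite mxE mulrA.
by rewrite exchange_big; apply: eq_bigr => i _; rewrite mulr_sumr.
Qed.

Lemma sum_reps_homog (R : {mpoly F[n.+1]}) d : R \is d.-homog -> (q - 1 %| d)%N -> (0 < d)%N ->
  \sum_(x in reps) R.@[fun j => x 0 j] =
  - \sum_(m <- msupp R) R@_m * \prod_i Ssum F (m i).
Proof.
move=> hR dv d0.
rewrite (eq_bigr (fun x => \sum_(m <- msupp R) R@_m * mono m x)); last first.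
  by move=> x _; rewrite mevalE.
rewrite exchange_big /= -sumrN big_seq [RHS]big_seq; apply: eq_bigr => m mR.
rewrite -mulr_sumr -mulrN; congr (_ * _).
have md : (\sum_i m i)%N = d by rewrite -mdegE; apply: (dhomog_mf hR).
by rewrite sum_reps_mono ?md.
Qed.

Lemma ortho_homog (P Q : {mpoly F[n.+1]}) d1 d2 :
  P \is d1.-homog -> Q \is d2.-homog -> (d1 + d2 = n * (q - 1))%N -> (0 < n)%N ->
  dotp (ev P) (ev Q) = 0.
Proof.
move=> hP hQ hd n0; rewrite dotp_ev.
have q1 := q_gt1 F.
rewrite (@sum_reps_homog _ (d1 + d2)) ?dhomogM // ?hd ?dvdn_mull //; last first.
  by rewrite muln_gt0 n0 subn_gt0 q_gt1.
rewrite big_seq big1 ?oppr0 // => m mR.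
have md : (\sum_i m i)%N = (n * (q - 1))%N.
  by rewrite -mdegE -hd; apply: (dhomog_mf (dhomogM hP hQ)).
have [i mi] : exists i, (m i < q - 1)%N.
  apply/existsP; apply: contraT; rewrite negb_exists => /forallP H.
  have : (\sum_(i < n.+1) (q - 1) <= \sum_i m i)%N.
    by apply: leq_sum => i _; have := H i; rewrite -leqNgt.
  rewrite md sum_nat_const card_ord; apply: contraTT => _.
  by rewrite -ltnNge mulSn -{1}[(n * _)%N]add0n ltn_add2r subn_gt0.
by rewrite (bigD1 i) //= Ssum_small // mul0r mulr0.
Qed.

Definition Hpoly (j : 'I_n.+1) (e : nat) : {mpoly F[n.+1]} :=
  \sum_(t : 'I_n.+1 | (t <= j)%N) 'X_t ^+ (e + (j - t) * (q - 1)) *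
     \prod_(i : 'I_n.+1 | (i < t)%N) ('X_t ^+ (q - 1) - 'X_i ^+ (q - 1)).

Lemma prod_ord_homog m (g : 'I_m -> {mpoly F[n.+1]}) d :
  (forall i, g i \is d.-homog) -> \prod_(i < m) g i \is (d * m).-homog.
Proof.
elim: m g => [|m IH] g hg; first by rewrite big_ord0 muln0 dhomog1.
rewrite big_ord_recr /= mulnS addnC; apply: dhomogM; last exact: hg.
by apply: IH => i; apply: hg.
Qed.

Lemma homogXn (t : 'I_n.+1) E : ('X_t ^+ E : {mpoly F[n.+1]}) \is E.-homog.
Proof.
suff h : ('X_t : {mpoly F[n.+1]}) \is 1.-homog by have := dhomogMn E h; rewrite mul1n.
by rewrite dhomogX; apply/eqP; apply: mdeg1.
Qed.

Lemma Hpoly_homog j e : Hpoly j e \is (e + j * (q - 1)).-homog.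
Proof.
apply: rpred_sum => t tj.
have E : (e + (j - t) * (q - 1) + (q - 1) * t = e + j * (q - 1))%N.
  by rewrite -addnA [((q - 1) * _)%N]mulnC -mulnDl subnK.
rewrite -E; apply: dhomogM; first exact: homogXn.
rewrite (big_ord_narrow (ltnW (ltn_ord t))); apply: prod_ord_homog => i.
by apply: rpredB; apply: homogXn.
Qed.

Lemma Hpoly_eval j e (P : vec) : (0 < e)%N -> P \in reps -> P 0 j != 0 ->
  (Hpoly j e).@[fun i => P 0 i] = 1.
Proof.
move=> e0 Pr Pj; case/rep_lead: Pr => s /andP[_ /forallP Ls] Ps1.
have Ls' (i : 'I_n.+1) : (i < s)%N -> P 0 i = 0 by move=> h; apply/eqP; have := Ls i; rewrite h.
have q1 : (0 < q - 1)%N by rewrite subn_gt0 q_gt1.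
have sj : (s <= j)%N.
  by case: leqP => // js; move: Pj; rewrite Ls' ?eqxx.
rewrite /Hpoly rmorph_sum /= (bigD1 s) //= [X in _ + X]big1 ?addr0.
  rewrite rmorphM rmorphXn /= mevalXU Ps1 expr1n mul1r rmorph_prod big1 // => i hi.
  by rewrite rmorphB !rmorphXn /= !mevalXU Ps1 Ls' // expr1n expr0n eqn0Ngt q1 subr0.
move=> t /andP[tj ts]; rewrite rmorphM rmorphXn /= mevalXU.
case: (ltngtP t s) ts => [ts|st|/val_inj ->]; last by rewrite eqxx.
  move=> _.
  by rewrite Ls' // expr0n eqn0Ngt addn_gt0 e0 /= mul0r.
move=> _; rewrite rmorph_prod (bigD1 s) //= rmorphB !rmorphXn /= !mevalXU Ps1 expr1n.
have [->|Pt0] := eqVneq (P 0 t) 0; first by rewrite expr0n eqn0Ngt addn_gt0 e0 mul0r.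
by rewrite expq1 // subrr mul0r mulr0.
Qed.

Local Notation J := 'I_((q - 1).+2).

Definition gam (c : F) (r : J) : F :=
  if r == ord_max then 1 else - ((- c) ^+ r *+ 'C(q - 1, r)).

Lemma gamE (c x : F) : 1 - (x - c) ^+ (q - 1) = \sum_(r : J) gam c r * x ^+ (q - 1 - r).
Proof.
rewrite big_ord_recr /= /gam eqxx mul1r.
have -> : (q - 1 - (q - 1).+1 = 0)%N by rewrite subnS subnn.
rewrite expr0 addrC; congr (_ + _).
rewrite exprDn -sumrN; apply: eq_bigr => i _.
have -> : (widen_ord (leqnSn _) i == ord_max) = false.
  by apply/negbTE; rewrite neq_ltn /= ltn_ord.
by rewrite /= mulNr mulrC -mulrnAl.
Qed.

Definition Cf (P0 : vec) (f : {ffun 'I_n.+1 -> J}) : F := \prod_i gam (P0 0 i) (f i).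
Definition gf (f : {ffun 'I_n.+1 -> J}) := fun i => (q - 1 - f i)%N.

Lemma delta_expand (P0 v : vec) :
  (v == P0)%:R = \sum_(f : {ffun 'I_n.+1 -> J}) Cf P0 f * mono (gf f) v.
Proof.
have q1 : (0 < q - 1)%N by rewrite subn_gt0 q_gt1.
transitivity (\prod_i (1 - (v 0 i - P0 0 i) ^+ (q - 1))).
  case: eqP => [->|/eqP vP].
    by rewrite big1 // => i _; rewrite subrr expr0n eqn0Ngt q1 subr0.
  have [i vi] : exists i, v 0 i != P0 0 i.
    apply/existsP; move: vP; apply: contraR; rewrite negb_exists => /forallP H.
    by apply/eqP/rowP => i; have := H i; rewrite negbK => /eqP.
  by rewrite (bigD1 i) //= expq1 ?subr_eq0 // subrr mul0r.
rewrite (eq_bigr (fun i => \sum_(r : J) gam (P0 0 i) r * v 0 i ^+ (q - 1 - r))); last first.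
  by move=> i _; rewrite gamE.
rewrite bigA_distr_bigA /=; apply: eq_bigr => f _.
by rewrite big_split.
Qed.

Lemma delta_proj (P0 P : vec) (l : nat) : P0 \in reps -> P \in reps ->
  (P == P0)%:R = \sum_(f : {ffun 'I_n.+1 -> J})
     (Cf P0 f * (if (q - 1 %| l + \sum_i gf f i)%N then -1 else 0)) * mono (gf f) P.
Proof.
move=> P0r Pr.
transitivity (\sum_(a : F | a != 0) a ^+ l * ((a *: P) == P0)%:R).
  case: eqP => [->|/eqP nP].
    rewrite (bigD1 1) ?oner_neq0 //= expr1n scale1r eqxx mul1r big1 ?addr0 //.
    move=> a /andP[a0 a1]; case: eqP => [e|]; last by rewrite mulr0.
    have := congr1 lc e; rewrite lcZ ?rep_nz // lc_rep // mulr1 => ea.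
    by move: a1; rewrite ea eqxx.
  rewrite big1 // => a a0; case: eqP => [e|]; last by rewrite mulr0.
  have nP0 : nrm P0 = P0 by rewrite -{1}[P0]scale1r nrmZ ?oner_neq0.
  have := congr1 nrm e; rewrite nrmZ // nP0 => ePP.
  by move: nP; rewrite ePP eqxx.
rewrite (eq_bigr (fun a => \sum_f a ^+ l * (Cf P0 f * mono (gf f) (a *: P)))); last first.
  by move=> a _; rewrite delta_expand mulr_sumr.
rewrite exchange_big /=; apply: eq_bigr => f _.
rewrite (eq_bigr (fun a => a ^+ (l + \sum_i gf f i) * (Cf P0 f * mono (gf f) P))); last first.
  by move=> a _; rewrite monoZ exprD; ring.
by rewrite -mulr_suml sum_nz_exp; case: ifP => _; ring.
Qed.

Definition cond (v : vec) := [exists j : 'I_n.+1, (j != ord_max) && (v 0 j != 0)].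
Definition sig (mu : F) (v : vec) : vec :=
  \row_i (if (i == ord_max) && cond v then mu * v 0 i else v 0 i).

Lemma sig_nmax mu v j : j != ord_max -> sig mu v 0 j = v 0 j.
Proof. by move=> /negbTE jm; rewrite /sig mxE jm. Qed.

Lemma cond_sig mu v : cond (sig mu v) = cond v.
Proof.
apply: eq_existsb => j; case: (boolP (j == ord_max)) => //= jm.
by rewrite sig_nmax.
Qed.

Lemma sigK mu : mu != 0 -> cancel (sig mu) (sig mu^-1).
Proof.
move=> mu0 v; apply/rowP => i; rewrite {1}/sig mxE cond_sig.
case: (boolP (i == ord_max)) => [/eqP ->|im] /=; last exact: sig_nmax.
by case cv: (cond v) => /=; rewrite /sig mxE eqxx cv //= mulrA mulVf // mul1r.
Qed.

Lemma sig_rep mu v : v \in reps -> sig mu v \in reps.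
Proof.
move=> vr; case: (boolP (cond v)) => cv; last first.
  suff -> : sig mu v = v by [].
  by apply/rowP => i; rewrite mxE (negbTE cv) andbF.
case/rep_lead: vr => s /andP[vs /forallP Ls] v1.
have sm : s != ord_max.
  apply/negP => /eqP es; case/existsP: cv => j /andP[jm vj].
  have : (j < s)%N by rewrite es; rewrite ltn_neqAle -ltnS ltn_ord andbT; apply: contra jm => /eqP h; apply/eqP/val_inj.
  by move=> js; have := Ls j; rewrite js (negbTE vj).
rewrite repP; apply/existsP; exists s; rewrite /isLead !sig_nmax // vs v1 eqxx andbT /=.
apply/forallP => j; apply/implyP => js; rewrite sig_nmax.
  by have := Ls j; rewrite js.
rewrite neq_ltn; apply/orP; left; apply: (leq_trans js); rewrite -ltnS ltn_ord //.
Qed.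

Lemma sig_repE mu v : mu != 0 -> (sig mu v \in reps) = (v \in reps).
Proof.
move=> mu0; apply/idP/idP; last exact: sig_rep.
by move/(sig_rep mu^-1); rewrite sigK.
Qed.

Definition emax : vec := delta_mx 0 ord_max.

Lemma reps_ncond v : (v \in reps) && ~~ cond v = (v == emax).
Proof.
apply/idP/idP.
  case/andP => /rep_lead [s /andP[vs _] v1] cv.
  have z j : j != ord_max -> v 0 j = 0.
    move=> jm; apply/eqP; apply: contraR cv => vj; apply/existsP; exists j; by rewrite jm.
  have sm : s = ord_max by apply/eqP; apply: contraR vs => /z ->; rewrite eqxx.
  apply/eqP/rowP => i; rewrite mxE /=; case: eqP => [->|/eqP im]; first by rewrite -sm v1.
  by rewrite z.
move/eqP ->; apply/andP; split.
  rewrite repP; apply/existsP; exists ord_max; apply/andP; split; last first.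
    by rewrite /emax mxE !eqxx.
  rewrite /isLead /emax mxE !eqxx oner_neq0 /=.
  apply/forallP => j; apply/implyP => jm; rewrite mxE /= (_ : (j == ord_max) = false) //.
  by apply/negbTE; rewrite neq_ltn jm.
rewrite negb_exists; apply/forallP => j; rewrite negb_and negbK.
case: (boolP (j == ord_max)) => //= jm.
by rewrite negbK /emax mxE (negbTE jm) andbF.
Qed.

Lemma sum_last_pow e : (0 < e)%N -> (e < q - 1)%N ->
  \sum_(x in reps) (x 0 ord_max) ^+ e = 1.
Proof.
move=> e0 eq; have [mu mu0 mue] := exists_nonroot e0 eq.
set g := fun x : vec => (x 0 ord_max) ^+ e.
have E : \sum_(x in reps) g x = \sum_(x in reps) (if cond x then mu ^+ e * g x else g x).
  rewrite (reindex_inj (can_inj (sigK mu0))) /=; apply: eq_big => x.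
    by rewrite sig_repE.
  move=> _; rewrite /g /sig mxE eqxx /=; case: (cond x) => //; exact: exprMn.
rewrite (bigID cond) /= [in RHS](bigID cond) /= in E.
rewrite [X in _ = X + _](eq_bigr (fun x => mu ^+ e * g x)) in E; last by move=> x /andP[_ ->].
rewrite [X in _ = _ + X](eq_bigr g) in E; last by move=> x /andP[_ /negbTE ->].
rewrite -mulr_sumr in E.
have A0 : \sum_(x in reps | cond x) g x = 0.
  move/eqP: E; rewrite -subr_eq0 opprD addrACA subrr addr0 -{1}[\sum_(x in reps | cond x) g x]mul1r.
  by rewrite -mulrBl mulf_eq0 subr_eq0 eq_sym (negbTE mue) /= => /eqP.
rewrite (bigID cond) /= A0 add0r (big_pred1 emax) ?/g ?mxE ?eqxx ?expr1n //.
by move=> x /=; rewrite reps_ncond.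
Qed.

Section Main.
Variables (k l : nat).
Hypothesis hn : (0 < n)%N.
Hypothesis hkl : (k + l = n * (q - 1))%N.
Hypothesis hl : (2 * l < q - 1)%N.

Lemma l_lt : (l < q - 1)%N.
Proof. by apply: leq_ltn_trans hl; rewrite leq_pmull. Qed.

Definition Tl := [set t : (n.+1).-tuple 'I_l.+1 | (\sum_(i <- t) (i : nat))%N == l].

Lemma card_Tl : #|Tl| = 'C(n + l, l).
Proof. by rewrite card_ord_partitions -[in RHS]bin_sub ?leq_addl // addnK. Qed.

Definition mnm (t : (n.+1).-tuple 'I_l.+1) : 'X_{1..n.+1} := [multinom (tnth t i : nat) | i < n.+1].

Lemma mnmE' t i : mnm t i = tnth t i.
Proof. by rewrite mnmE. Qed.

Lemma mdeg_mnm t : t \in Tl -> mdeg (mnm t) = l.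
Proof.
rewrite inE => /eqP <-; rewrite mdegE [RHS]big_tuple; apply: eq_bigr => i _.
by rewrite mnmE'.
Qed.

Lemma mnm_inj : injective mnm.
Proof.
move=> s t /mnmP h; apply: eq_from_tnth => i; apply: val_inj.
by have := h i; rewrite !mnmE'.
Qed.

Definition tup (m : 'X_{1..n.+1}) : (n.+1).-tuple 'I_l.+1 := [tuple inord (m i) | i < n.+1].

Lemma mle (m : 'X_{1..n.+1}) i : (m i <= mdeg m)%N.
Proof. by rewrite mdegE (bigD1 i) //= leq_addr. Qed.

Lemma tupK m : mdeg m = l -> mnm (tup m) = m /\ tup m \in Tl.
Proof.
move=> ml.
have e : mnm (tup m) = m.
  apply/mnmP => i; rewrite mnmE' tnth_mktuple inordK //.
  by rewrite ltnS -ml mle.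
split=> //; rewrite inE big_tuple; apply/eqP; rewrite -[in RHS]ml mdegE.
by apply: eq_bigr => i _; rewrite -mnmE' e.
Qed.

Definition comp (c : 'I_n.+1 -> nat) := fun i => (q - 1 - c i)%N.

Lemma mnm_le t i : t \in Tl -> (mnm t i < q - 1)%N.
Proof.
move=> tT; apply: leq_ltn_trans l_lt; rewrite -(mdeg_mnm tT); exact: mle.
Qed.

Lemma sum_dual s t : s \in Tl -> t \in Tl ->
  (\sum_i (mnm s i + comp (mnm t) i) = n.+1 * (q - 1))%N.
Proof.
move=> sT tT.
have : (\sum_i (mnm s i + comp (mnm t) i) + \sum_i mnm t i
        = \sum_i mnm s i + n.+1 * (q - 1))%N.
  have -> : (n.+1 * (q - 1) = \sum_(i < n.+1) (q - 1))%N by rewrite sum_nat_const card_ord.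
  rewrite -!big_split /=.
  apply: eq_bigr => i _; rewrite /comp -addnA subnK //.
  by apply: ltnW; apply: mnm_le.
by rewrite -!mdegE !mdeg_mnm // addnC => /addnI.
Qed.

Lemma dotp_dual s t : s \in Tl -> t \in Tl ->
  dotp (mv (mnm s)) (mv (comp (mnm t))) = if s == t then (-1) ^+ n else 0.
Proof.
move=> sT tT; rewrite dotp_mv sum_reps_mono ?sum_dual ?dvdn_mull //; last first.
  by rewrite muln_gt0 /= subn_gt0 q_gt1.
case: eqP => [<-|/eqP st].
  rewrite (eq_bigr (fun _ => -1)) => [|i _]; last first.
    rewrite /comp subnKC ?SsumE; last by apply: ltnW; apply: mnm_le.
    by rewrite dvdnn subn_gt0 q_gt1.
  by rewrite prodr_const card_ord exprS mulN1r opprK.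
have [i si] : exists i, mnm s i != mnm t i.
  apply/existsP; apply: contraR st; rewrite negb_exists => /forallP H.
  apply/eqP/mnm_inj/mnmP => i; by have := H i; rewrite negbK => /eqP.
rewrite (bigD1 i) //= SsumE /comp.
have ti := mnm_le i tT; have si' := mnm_le i sT.
case: (ltngtP (mnm s i) (mnm t i)) si => // h _.
  rewrite (_ : (q - 1 %| _)%N = false) ?andbF ?mul0r ?oppr0 //.
  apply/negP => /(dvdn_leq _); rewrite addn_gt0 subn_gt0 ti orbT => /(_ isT).
  lia.
rewrite (_ : (q - 1 %| _)%N = false) ?andbF ?mul0r ?oppr0 //.
have -> : (mnm s i + (q - 1 - mnm t i) = (mnm s i - mnm t i) + (q - 1))%N by lia.
rewrite dvdn_addl // ndvd_small //; first by rewrite subn_gt0.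
lia.
Qed.

Definition T0 : (n.+1).-tuple 'I_l.+1 := [tuple ord0 | _ < n.+1].
Definition Xl := [seq mv (mnm t) | t <- enum Tl].

Lemma free_Xl : free Xl.
Proof.
apply/(@freeP _ _ _ (in_tuple Xl)) => kk h j.
have sz : size Xl = size (enum Tl) by rewrite size_map.
pose tn (i : 'I_(size Xl)) := nth T0 (enum Tl) i.
have tnT i : tn i \in Tl.
  by rewrite -mem_enum /tn mem_nth // -sz.
have Xn (i : 'I_(size Xl)) : Xl`_i = mv (mnm (tn i)) by rewrite (nth_map T0) // -sz.
have := congr1 (fun x => dotp x (mv (comp (mnm (tn j))))) h.
rewrite /= dotp_suml.
rewrite (eq_bigr (fun i => kk i * (if i == j then (-1) ^+ n else 0))); last first.
  move=> i _; rewrite Xn dotp_dual //; congr (_ * _).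
  have -> : (tn i == tn j) = (i == j) by rewrite /tn nth_uniq ?enum_uniq // -?sz.
  by [].
rewrite (bigD1 j) //= eqxx big1 => [|i /negbTE ->]; last by rewrite mulr0.
rewrite addr0 /dotp big1 => [|i _]; last by rewrite mxE mul0r.
by move/eqP; rewrite mulf_eq0 signr_eq0 orbF => /eqP.
Qed.

Lemma mem_PRM_mnm t : t \in Tl -> mv (mnm t) \in PRM F n l.
Proof.
move=> tT; apply/PRMP; exists 'X_[mnm t]; last exact: evX'.
by rewrite dhomogX; apply/eqP; apply: mdeg_mnm.
Qed.

Lemma PRMl_span : PRM F n l = <<Xl>>%VS.
Proof.
apply/vspaceP => c; apply/idP/idP.
  case/PRMP => P hP <-; rewrite {1}(mpolyE P) ev_sum big_seq.
  apply: memv_suml => m mP; rewrite evZ; apply: memvZ; rewrite evX'.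
  have [e eT] := tupK (dhomog_mf hP mP); rewrite -e.
  by apply: memv_span; apply: map_f; rewrite mem_enum.
move=> cX; move: c cX; apply/subvP/span_subvP => x /mapP [t].
by rewrite mem_enum => tT ->; apply: mem_PRM_mnm.
Qed.

Lemma dim_PRMl : \dim (PRM F n l) = 'C(n + l, l).
Proof. by rewrite PRMl_span (eqP free_Xl) size_map -cardE card_Tl. Qed.

Definition ttop : (n.+1).-tuple 'I_l.+1 :=
  [tuple (if i == ord_max then inord l else ord0) | i < n.+1].

Lemma mnm_ttop i : mnm ttop i = if i == ord_max then l else 0%N.
Proof. by rewrite mnmE' tnth_mktuple; case: eqP => // _; rewrite inordK. Qed.

Lemma ttopT : ttop \in Tl.
Proof.
rewrite inE big_tuple (bigD1 ord_max) //= big1 => [|i /negbTE ni]; last first.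
  by rewrite tnth_mktuple ni.
by rewrite tnth_mktuple eqxx inordK // addn0.
Qed.

Lemma ttop_ex t : t \in Tl -> t != ttop -> exists2 j : 'I_n.+1, (j < n)%N & (0 < mnm t j)%N.
Proof.
move=> tT ntop.
case: (boolP [exists j : 'I_n.+1, (j < n)%N && (0 < mnm t j)%N]).
  by case/existsP => j /andP[jn tj]; exists j.
rewrite negb_exists => /forallP H; exfalso; move/negP: ntop; apply.
apply/eqP/mnm_inj/mnmP => i; rewrite mnm_ttop.
have Hz j : j != ord_max -> mnm t j = 0%N.
  move=> jm; have := H j; rewrite negb_and => /orP[|]; last by rewrite lt0n negbK => /eqP.
  have : (j < n)%N.
    by have := ltn_ord j; rewrite ltnS leq_eqVlt => /orP[/eqP e|//]; case/eqP: jm; apply: val_inj.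
  by move=> ->.
case: eqP => [->|/eqP im]; last exact: Hz.
have := mdeg_mnm tT; rewrite mdegE (bigD1 ord_max) //= big1 ?addn0 //.
Qed.

Lemma mem_Sk t : t \in Tl -> t != ttop -> mv (mnm t) \in PRM F n k.
Proof.
move=> tT ntop; have [j jn tj] := ttop_ex tT ntop.
pose e := (k - l - j * (q - 1))%N.
have q1 : (0 < q - 1)%N by rewrite subn_gt0 q_gt1.
have he : (0 < e)%N.
  rewrite /e; have : (j.+1 * (q - 1) <= n * (q - 1))%N by rewrite leq_mul2r jn orbT.
  move: hkl hl; nia.
apply/PRMP; exists ('X_[mnm t] * Hpoly j e).
  have -> : k = (l + (e + j * (q - 1)))%N.
    rewrite /e; have : (j.+1 * (q - 1) <= n * (q - 1))%N by rewrite leq_mul2r jn orbT.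
    move: hkl hl; nia.
  apply: dhomogM; last exact: Hpoly_homog.
  by rewrite dhomogX; apply/eqP; apply: mdeg_mnm.
apply/rowP => i; rewrite !mxE mevalM mevalX.
have Pr : pt i \in reps by apply: enum_valP.
have [Pj0|Pj] := eqVneq (pt i 0 j) 0.
  have -> : mono (mnm t) (pt i) = 0.
    by rewrite /mono (bigD1 j) //= Pj0 expr0n eqn0Ngt tj mul0r.
  by rewrite [X in X * _](_ : _ = 0) ?mul0r // /mono (bigD1 j) //= Pj0 expr0n eqn0Ngt tj mul0r.
by rewrite Hpoly_eval // mulr1.
Qed.

Definition Miss := <<[seq mv (comp (mnm t)) | t <- enum Tl]>>%VS.

Lemma mv_ext c c' : c =1 c' -> mv c = mv c'.
Proof. by move=> h; apply/rowP => i; rewrite !mxE; apply: eq_bigr => j _; rewrite h. Qed.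

Lemma G1 (c : 'I_n.+1 -> nat) : (forall i, c i <= q - 1)%N ->
  (q - 1 %| l + \sum_i c i)%N -> (0 < \sum_i c i)%N ->
  mv c \in (PRM F n k + Miss)%VS.
Proof.
move=> cle dv c0; set s := (\sum_i c i)%N.
have q1 : (0 < q - 1)%N by rewrite subn_gt0 q_gt1.
case: (leqP s k) => [sk|ks].
  apply: (subvP (addvSl _ _)).
  have [j cj] : exists j, (0 < c j)%N.
    apply/existsP; move: c0; apply: contraLR; rewrite negb_exists => /forallP H.
    rewrite -leqNgt leqn0 sum_nat_eq0; apply/forallP => i; apply/implyP => _.
    by have := H i; rewrite lt0n negbK.
  have dk : (q - 1 %| k - s)%N.
    have -> : (k - s = n * (q - 1) - (l + s))%N by rewrite -hkl; lia.
    by rewrite dvdn_sub // dvdn_mull.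
  pose m' := [multinom (if i == j then c j + (k - s) else c i)%N | i < n.+1].
  apply/PRMP; exists 'X_[m'].
    rewrite dhomogX; apply/eqP; transitivity (mdeg m') => //.
    rewrite mdegE (bigD1 j) //= mnmE eqxx.
    rewrite (eq_bigr c) => [|i /negbTE ij]; last by rewrite mnmE ij.
    have := sk; rewrite /s (bigD1 j) //=; lia.
  rewrite evX'; apply/rowP => x; rewrite !mxE; apply: eq_bigr => i _.
  rewrite mnmE; case: eqP => [->|//]; rewrite -(divnK dk) mulnC; exact: exp_red.
apply: (subvP (addvSr _ _)).
have sle : (s <= n.+1 * (q - 1))%N.
  have := @leq_sum _ (index_enum 'I_n.+1) xpredT c (fun _ => (q - 1)%N) (fun i _ => cle i).
  by rewrite sum_nat_const card_ord.
have Ls : (l + s = n.+1 * (q - 1))%N.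
  have e := divnK dv; set r := ((l + s) %/ (q - 1))%N in e.
  have h1 : (n * (q - 1) < r * (q - 1))%N by rewrite e -hkl; lia.
  have h2 : (r * (q - 1) < (n.+2) * (q - 1))%N.
    rewrite e; have := l_lt; rewrite !mulSn; lia.
  rewrite ltn_pmul2r // in h1; rewrite ltn_pmul2r // in h2.
  by rewrite -e; congr (_ * _)%N; lia.
have mb : (\sum_i comp c i = l)%N.
  have : (\sum_i comp c i + s = n.+1 * (q - 1))%N.
    have -> : (n.+1 * (q - 1) = \sum_(i < n.+1) (q - 1))%N by rewrite sum_nat_const card_ord.
    rewrite /s -big_split /=.
    by apply: eq_bigr => i _; rewrite /comp subnK.
  lia.
pose m := [multinom comp c i | i < n.+1].
have md : mdeg m = l by rewrite mdegE -mb; apply: eq_bigr => i _; rewrite mnmE.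
have [e eT] := tupK md.
have -> : mv c = mv (comp (mnm (tup m))).
  by apply: mv_ext => i; rewrite e /comp mnmE subKn.
by apply: memv_span; apply: map_f; rewrite mem_enum.
Qed.

Lemma G2 (c : 'I_n.+1 -> nat) : (forall i, c i <= q - 1)%N ->
  (q - 1 %| l + \sum_i c i)%N -> mv c \in (PRM F n k + Miss)%VS.
Proof.
move=> cle dv; case: (posnP (\sum_i c i)) => [c0|]; last exact: G1.
have q1 : (0 < q - 1)%N by rewrite subn_gt0 q_gt1.
have l0 : l = 0%N.
  move: dv; rewrite c0 addn0; case: (posnP l) => // lp /(dvdn_leq lp).
  by rewrite leqNgt l_lt.
have cz i : c i = 0%N by move: c0 => /eqP; rewrite sum_nat_eq0 => /forallP /(_ i) /implyP /(_ isT) /eqP.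
pose fmax : {ffun 'I_n.+1 -> 'I_((q - 1).+2)} := [ffun _ => ord_max].
have eq1 : mv c = \sum_(f | f != fmax) (- Cf 0 f) *: mv (gf f).
  apply/rowP => x; rewrite summxE !mxE.
  have Pr : pt x \in reps by apply: enum_valP.
  have := delta_expand 0 (pt x); rewrite (negbTE (rep_nz Pr)) (bigD1 fmax) //=.
  have -> : Cf 0 fmax = 1 by rewrite /Cf big1 // => i _; rewrite ffunE /gam eqxx.
  have -> : mono (gf fmax) (pt x) = 1.
    by rewrite /mono big1 // => i _; rewrite /gf ffunE /= subnS subnn expr0.
  have -> : mono c (pt x) = 1 by rewrite /mono big1 // => i _; rewrite cz expr0.
  move/eqP; rewrite eq_sym mul1r addr_eq0 => /eqP ->; rewrite -sumrN.
  by apply: eq_bigr => f _; rewrite !mxE mulNr.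
rewrite eq1; apply: memv_suml => f nf.
have [C0|Cn] := eqVneq (Cf 0 f) 0; first by rewrite C0 oppr0 scale0r mem0v.
apply: memvZ; apply: G1 => [i||]; first by rewrite /gf leq_subr.
- have fi i : (f i == ord_max) || (f i == 0 :> nat).
    apply: contraR Cn; rewrite negb_or => /andP[fm f0].
    rewrite /Cf (bigD1 i) //= /gam (negbTE fm) /= mxE oppr0 expr0n (negbTE f0).
    by rewrite mul0rn oppr0 mul0r.
  rewrite l0 add0n; apply: dvdn_sum => i _; rewrite /gf.
  by case/orP: (fi i) => [/eqP ->|/eqP ->]; rewrite ?subnS ?subnn ?dvdn0 ?subn0.
- have fi i : (f i == ord_max) || (f i == 0 :> nat).
    apply: contraR Cn; rewrite negb_or => /andP[fm f0].
    rewrite /Cf (bigD1 i) //= /gam (negbTE fm) /= mxE oppr0 expr0n (negbTE f0).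
    by rewrite mul0rn oppr0 mul0r.
  have [i fi'] : exists i, f i != ord_max.
    apply/existsP; move: nf; apply: contraR; rewrite negb_exists => /forallP H.
    by apply/eqP/ffunP => i; rewrite ffunE; have := H i; rewrite negbK => /eqP.
  have fi0 : f i = 0 :> nat by move: (fi i); rewrite (negbTE fi') => /eqP.
  by rewrite (bigD1 i) //= /gf fi0 subn0 addn_gt0 q1.
Qed.

Lemma full_sum : (fullv <= PRM F n k + Miss)%VS.
Proof.
apply/subvP => u _; rewrite (row_sum_delta u); apply: memv_suml => i0 _.
apply: memvZ.
have Pr0 : pt i0 \in reps by apply: enum_valP.
have -> : delta_mx 0 i0 = \sum_(f : {ffun 'I_n.+1 -> 'I_((q - 1).+2)})
   (Cf (pt i0) f * (if (q - 1 %| l + \sum_i gf f i)%N then -1 else 0)) *: mv (gf f).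
  apply/rowP => i; rewrite summxE !mxE.
  have Pr : pt i \in reps by apply: enum_valP.
  rewrite eqxx /=; transitivity ((pt i == pt i0)%:R : F).
    by rewrite /point (inj_eq enum_val_inj).
  by rewrite (delta_proj l Pr0 Pr); apply: eq_bigr => f _; rewrite !mxE.
apply: memv_suml => f _; case: ifP => dv; last by rewrite mulr0 scale0r mem0v.
by apply: memvZ; apply: G2 => // i; rewrite /gf leq_subr.
Qed.

Lemma dotp_top : dotp (mv (mnm ttop)) (mv (mnm ttop)) = 1.
Proof.
rewrite dotp_mv.
have E x : mono (fun i => mnm ttop i + mnm ttop i)%N x = x 0 ord_max ^+ (l + l).
  rewrite /mono (bigD1 ord_max) //= big1 ?mulr1 ?mnm_ttop ?eqxx // => i /negbTE im.
  by rewrite mnm_ttop im expr0.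
rewrite (eq_bigr _ (fun x _ => E x)).
case: (posnP l) => [l0|lp].
  rewrite l0 (eq_bigr (fun _ => 1)) => [|x _]; last by rewrite expr0.
  by rewrite sumr_const card_reps_F.
apply: sum_last_pow; first by rewrite addn_gt0 lp.
by rewrite addnn -mul2n.
Qed.

Lemma PRMl_dual : (PRM F n l <= dual_code (PRM F n k))%VS.
Proof.
apply/subvP => u /PRMP [Q hQ <-]; apply/dualP => c /PRMP [P hP <-].
exact: (ortho_homog hP hQ hkl hn).
Qed.

Lemma dim_full : \dim (fullv : {vspace 'rV[F]_N}) = N.
Proof. by rewrite dimvf /dim /= mul1n. Qed.

Lemma main_dims : \dim (hull (PRM F n k)) = ('C(n + l, l) - 1)%N.
Proof.
set S := PRM F n k; set D := dual_code S.
set w := mv (mnm ttop).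
have sXl : size Xl = 'C(n + l, l) by rewrite size_map -cardE card_Tl.
have wD : w \in D by apply: (subvP PRMl_dual); apply: mem_PRM_mnm; apply: ttopT.
have wH : w \notin hull S.
  apply/negP; rewrite memv_cap => /andP[wS wD'].
  have := (dualP _ _ wD') w wS; rewrite dotp_top => /eqP; by rewrite oner_eq0.
have up1 : (N <= \dim S + 'C(n + l, l))%N.
  rewrite -{1}dim_full; apply: leq_trans (dimvS full_sum) _.
  apply: leq_trans (dimv_add_leqif _ _).1 _; rewrite leq_add2l.
  by rewrite -sXl; apply: leq_trans (dim_span _) _; rewrite !size_map.
have up2 := dim_dual S.
have hD : (hull S <= D)%VS by apply: capvSr.
have lt : (\dim (hull S) < \dim D)%N.
  rewrite (ltn_leqif (dimv_leqif_sup hD)); apply/negP => /subvP /(_ w wD).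
  by rewrite (negbTE wH).
pose Xl' := filter (predC1 w) Xl.
have fX : free Xl' by apply: filter_free; apply: free_Xl.
have wX : w \in Xl by apply: map_f; rewrite mem_enum; apply: ttopT.
have sX' : size Xl' = ('C(n + l, l) - 1)%N.
  have := count_predC (pred1 w) Xl.
  rewrite count_uniq_mem ?free_uniq ?free_Xl // wX sXl /Xl' size_filter.
  move=> <-; by rewrite add1n subSS subn0.
have low : (\dim <<Xl'>> <= \dim (hull S))%N.
  apply: dimvS; apply/span_subvP => x; rewrite mem_filter => /andP[xw /mapP [t]].
  rewrite mem_enum => tT ex; rewrite memv_cap; apply/andP; split.
    rewrite ex; apply: mem_Sk => //; apply: contraNneq xw => et.
    by rewrite /= ex et.
  by apply: (subvP PRMl_dual); rewrite ex; apply: mem_PRM_mnm.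
rewrite (eqP fX) sX' in low.
apply/eqP; rewrite eqn_leq low andbT.
move: up2; rewrite -/D => up2.
lia.
Qed.

End Main.
End Proj.

Theorem mainTheorem9 (F : finFieldType) (n k : nat) :
  let q := #|F| in
  (1 <= n)%N ->
  (2 * (n * (q - 1)) - (q - 1) < 2 * k)%N ->
  (k <= n * (q - 1))%N ->
  let l := (n * (q - 1) - k)%N in
  \dim (hull (PRM F n k)) = (\dim (PRM F n l) - 1)%N /\
  (\dim (PRM F n l) - 1)%N = ('C(n + l, l) - 1)%N.
Proof.
move=> q hn h1 h2 l.
have hkl : (k + l = n * (q - 1))%N by rewrite /l subnKC.
have hl : (2 * l < q - 1)%N by rewrite /l; lia.
have e1 := @main_dims F n k l hn hkl hl.
have e2 := @dim_PRMl F n k l hn hkl hl.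
by rewrite e1 e2.
Qed.
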